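(* Let $\mathbb{R}^p=E^q\oplus E^{p-q}$ be a decomposition with $\dim E^q=q\ge1$ such that the image of $E^q$ in the torus $\mathbb{R}^p/\mathbb{Z}^p$ is dense, and fix a scalar product on $E^q$. Let $A\in\mathrm{GL}_p(\mathbb{Z})$ preserve $E^q$ and $E^{p-q}$ and assume that $A|_{E^q}$ is a similarity for the given scalar product. Then $A$ is semi-simple (diagonalizable over $\mathbb{C}$). In particular, every element of a subgroup $U\subset\mathrm{GL}_p(\mathbb{Z})$ all of whose elements have these properties is semi-simple. *)

(* Defs.v *)
From HB Require Import structures.
From mathcomp Require Import all_boot all_order all_algebra all_field.
From mathcomp Require Import reals.
Set Implicit Arguments. Unset Strict Implicit. Unset Printing Implicit Defensive.
Import Order.TTheory GRing.Theory Num.Theory.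
Local Open Scope ring_scope.

(* Vectors of R^p are row vectors 'rV[R]_p; a matrix acts by v |-> v *m M.
   A subspace of R^p is the row space of a square matrix E : 'M[R]_p. *)

(* The image of the subspace E in the torus R^p / Z^p is dense, i.e.
   E + Z^p is dense in R^p (sup-norm on coordinates). *)
Definition dense_mod_Zp (R : realType) (p : nat) (E : 'M[R]_p) : Prop :=
  forall (x : 'rV[R]_p) (eps : R), 0 < eps ->
    exists (e : 'rV[R]_p) (z : 'rV[int]_p),
      (e <= E)%MS /\ forall i, `|x 0 i - e 0 i - (z 0 i)%:~R| < eps.

Definition scalar_product_on (R : realType) (p : nat) (E S : 'M[R]_p) : Prop :=
  S^T = S /\
  forall u : 'rV[R]_p, (u <= E)%MS -> u != 0 -> 0 < (u *m S *m u^T) 0 0.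

(* The linear map M (which preserves E) restricted to E is a similarity for
   the scalar product S: it multiplies the scalar product by a constant c > 0
   (c = lambda^2, lambda the similarity ratio). *)
Definition similarity_on (R : realType) (p : nat) (E S M : 'M[R]_p) : Prop :=
  exists2 c : R, 0 < c &
    forall u v : 'rV[R]_p, (u <= E)%MS -> (v <= E)%MS ->
      (u *m M *m S *m (v *m M)^T) 0 0 = c * (u *m S *m v^T) 0 0.

Definition GLZ (p : nat) (A : 'M[int]_p) : Prop := `|\det A| = 1.

(* Main.v *)
Require Import Defs.
From HB Require Import structures.
From mathcomp Require Import all_boot all_order all_algebra all_field.
From mathcomp Require Import reals.
From mathcomp Require Import ring lra zify.
Import Order.TTheory GRing.Theory Num.Theory.
Local Open Scope ring_scope.

Definition adjE (K : fieldType) n (E S X Y : 'M[K]_n) :=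
  forall x y : 'rV_n, (x <= E)%MS -> (y <= E)%MS ->
    x *m X *m S *m y^T = x *m S *m (y *m Y)^T.
Arguments adjE {K n}.

Lemma adjE_add (K : fieldType) n (E S X1 Y1 X2 Y2 : 'M[K]_n) :
  adjE E S X1 Y1 -> adjE E S X2 Y2 -> adjE E S (X1 + X2) (Y1 + Y2).
Proof.
move=> h1 h2 x y xE yE.
by rewrite mulmxDr !mulmxDl h1 // h2 // mulmxDr linearD mulmxDr.
Qed.

Lemma adjE_scalar (K : fieldType) n (E S : 'M[K]_n) a :
  adjE E S a%:M a%:M.
Proof.
move=> x y _ _.
by rewrite !mul_mx_scalar -scalemxAl linearZ -!scalemxAr -scalemxAl.
Qed.

Lemma adjE_mul (K : fieldType) n (E S X1 Y1 X2 Y2 : 'M[K]_n) :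
  (E *m X1 <= E)%MS -> (E *m Y2 <= E)%MS ->
  adjE E S X1 Y1 -> adjE E S X2 Y2 -> adjE E S (X1 *m X2) (Y2 *m Y1).
Proof.
move=> sX1 sY2 h1 h2 x y xE yE.
have xX1 : (x *m X1 <= E)%MS by apply: submx_trans sX1; apply: submxMr.
have yY2 : (y *m Y2 <= E)%MS by apply: submx_trans sY2; apply: submxMr.
by rewrite mulmxA h2 // h1 // mulmxA.
Qed.

Lemma adjE_horner (K : fieldType) n (E S B B' : 'M[K]_n.+1) (h : {poly K}) :
  (E *m B <= E)%MS -> (E *m B' <= E)%MS -> adjE E S B B' ->
  adjE E S (horner_mx B h) (horner_mx B' h).
Proof.
move=> sB sB' hB; elim/poly_ind: h => [|h c IH].
  rewrite !rmorph0 => x y _ _; by rewrite ?mulmx0 ?mul0mx ?trmx0 ?mulmx0.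
rewrite !rmorphD !rmorphM /= !horner_mx_X !horner_mx_C -!mulmxE.
apply: adjE_add; last exact: adjE_scalar.
have -> : horner_mx B' h *m B' = B' *m horner_mx B' h.
  by have := comm_mx_horner h (comm_mx_refl B').
apply: adjE_mul => //; exact: horner_mx_stable.
Qed.
Lemma mx11_eq (K : ringType) (M N : 'M[K]_1) : M 0 0 = N 0 0 -> M = N.
Proof. by move=> h; apply/matrixP => i j; rewrite !ord1. Qed.

Lemma stable_inv (K : fieldType) n (E B : 'M[K]_n.+1) :
  B \in unitmx -> (E *m B <= E)%MS -> (E *m invmx B <= E)%MS.
Proof.
move=> Bu sB.
have EB : (E <= E *m B)%MS.
  rewrite -(mxrank_leqif_sup sB).2 mxrankMfree ?row_free_unit //.
by have := submxMr (invmx B) EB; rewrite mulmxK.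
Qed.

Arguments stable_inv {K n E B}.
Lemma onE_semisimple (R : realType) n (E S B : 'M[R]_n.+1) (c : R) (h : {poly R}) :
  B \in unitmx -> (E *m B <= E)%MS ->
  (forall w : 'rV_n.+1, (w <= E)%MS -> w *m S *m w^T = 0 -> w = 0) ->
  (forall u v : 'rV_n.+1, (u <= E)%MS -> (v <= E)%MS ->
     (u *m B *m S *m (v *m B)^T) 0 0 = c * (u *m S *m v^T) 0 0) ->
  forall u : 'rV_n.+1, (u <= E)%MS ->
    u *m horner_mx B h *m horner_mx B h = 0 -> u *m horner_mx B h = 0.
Proof.
move=> Bu sB pd sim u uE uHH.
pose B' := c *: invmx B.
have sBi := stable_inv Bu sB.
have sB' : (E *m B' <= E)%MS by rewrite /B' -scalemxAr scalemx_sub.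
have adjB : adjE E S B B'.
  move=> x y xE yE; apply: mx11_eq.
  rewrite -[in X in X = _](mulmxKV Bu y) sim //; last first.
    by apply: submx_trans sBi; apply: submxMr.
  by rewrite /B' -scalemxAr linearZ /= -scalemxAr [RHS]mxE.
have cBB' : comm_mx B B'.
  by rewrite /comm_mx /B' -scalemxAr -scalemxAl mulmxV // mulVmx.
set H := horner_mx B h.
pose H' := horner_mx B' h.
have adjH : adjE E S H H' by apply: adjE_horner.
have commH : H *m H' = H' *m H.
  exact: (comm_horner_mx h (comm_mx_horner h cBB')).
have sH : (E *m H <= E)%MS by apply: horner_mx_stable.
have sH' : (E *m H' <= E)%MS by apply: horner_mx_stable.
set w := u *m H.
have wE : (w <= E)%MS by apply: submx_trans sH; apply: submxMr.
pose v := w *m H'.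
have vE : (v <= E)%MS by apply: submx_trans sH'; apply: submxMr.
have v0 : v = 0.
  apply: pd => //.
  rewrite -(adjH v w vE wE) /v -(mulmxA w) -commH mulmxA.
  by rewrite [w *m H]uHH !mul0mx.
apply: pd => //.
by rewrite {1}/w (adjH u w uE wE) -/v v0 trmx0 mulmx0.
Qed.
Arguments onE_semisimple {R n E S B c h}.
Lemma half_int_far (R : realType) (m : int) : 1/2 <= `|1/2 - (m%:~R : R)|.
Proof.
have [m0|m1] := lerP m 0.
  have : (m%:~R : R) <= 0 by rewrite -(ler_int R) in m0.
  move=> h; rewrite ger0_norm; lra.
have : (1 : R) <= m%:~R by rewrite (_ : 1 = 1%:~R) // ler_int.
move=> h; rewrite ler0_norm; lra.
Qed.

Lemma descent_int (R : realType) n (E : 'M[R]_n) (kz : 'I_n -> int) (i0 : 'I_n) :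
  kz i0 != 0 ->
  (forall e : 'rV_n, (e <= E)%MS -> \sum_i e 0 i * (kz i)%:~R = 0) ->
  dense_mod_Zp E -> False.
Proof.
move=> kz0 orth dense.
pose K : R := \sum_i `|(kz i)%:~R : R|.
have K0 : 0 <= K by apply: sumr_ge0 => i _; exact: normr_ge0.
pose a : R := ((kz i0)%:~R)^-1 / 2.
pose x : 'rV[R]_n := \row_i (if i == i0 then a else 0).
pose eps : R := (2 * (K + 1))^-1.
have eps0 : 0 < eps by rewrite /eps invr_gt0; lra.
have epsK : eps * (2 * (K + 1)) = 1 by rewrite mulVf //; lra.
have [e [z [eE hz]]] := dense x eps eps0.
have kzR0 : (kz i0)%:~R != 0 :> R by rewrite intr_eq0.
have xs : \sum_i x 0 i * (kz i)%:~R = 1/2.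
  rewrite (bigD1 i0) //= big1 ?addr0.
    by rewrite mxE eqxx /a mulrAC mulVf // mul1r.
  by move=> i /negPf ni; rewrite mxE ni mul0r.
pose M : int := \sum_i z 0 i * kz i.
have key : \sum_i (x 0 i - e 0 i - (z 0 i)%:~R) * (kz i)%:~R = 1/2 - M%:~R.
  rewrite /M rmorph_sum /=.
  under eq_bigr => i _ do rewrite !mulrBl.
  rewrite !sumrB xs orth // subr0.
  by congr (_ - _); apply: eq_bigr => i _; rewrite intrM.
have bnd : `|\sum_i (x 0 i - e 0 i - (z 0 i)%:~R) * (kz i)%:~R| <= eps * K.
  apply: le_trans (ler_norm_sum _ _ _) _.
  rewrite /K mulr_sumr; apply: ler_sum => i _.
  rewrite normrM; apply: ler_wpM2r; first exact: normr_ge0.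
  exact: ltW.
have := half_int_far R M.
rewrite -key.
have : eps * K < 1/2 by lra.
move=> h1 h2; lra.
Qed.

Lemma descent (R : realType) n (E : 'M[R]_n) (N : 'M[rat]_n) :
  dense_mod_Zp E ->
  (forall e : 'rV_n, (e <= E)%MS -> e *m map_mx ratr N = 0) -> N = 0.
Proof.
move=> dense orth.
apply/matrixP => i0 j; rewrite mxE.
have [//|Nij] := eqVneq (N i0 j) 0; exfalso.
pose k i := N i j.
pose D : int := \prod_l denq (k l).
pose kz i : int := numq (k i) * \prod_(l | l != i) denq (k l).
have kzE i : (kz i)%:~R = D%:~R * k i :> rat.
  rewrite /kz /D [X in _ = X%:~R * _](bigD1 i) //= !intrM.
  have dn : (denq (k i))%:~R != 0 :> rat by rewrite intr_eq0 denq_neq0.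
  rewrite -{3}(divq_num_den (k i)).
  by field.
have D0 : D != 0 by apply/prodf_neq0 => l _; exact: denq_neq0.
have kz0 : kz i0 != 0.
  by rewrite -(intr_eq0 rat) kzE mulf_neq0 // intr_eq0.
apply: (@descent_int R n E kz i0 kz0 _ dense).
move=> e eE.
have := congr1 (fun M : 'M[R]_(1, n) => M 0 j) (orth e eE); rewrite !mxE /= => h.
transitivity (ratr (D%:~R : rat) * \sum_i e 0 i * ratr (N i j) : R).
  rewrite mulr_sumr; apply: eq_bigr => i _.
  by rewrite -ratr_int kzE rmorphM /= mulrCA.
by move: h; under eq_bigr => i _ do rewrite mxE; move=> ->; rewrite mulr0.
Qed.
Arguments descent {R n E N}.
Lemma key_sq (R : realType) n (E S : 'M[R]_n.+1) (AQ : 'M[rat]_n.+1) (c : R) :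
  dense_mod_Zp E -> map_mx (ratr : rat -> R) AQ \in unitmx ->
  (E *m map_mx (ratr : rat -> R) AQ <= E)%MS ->
  (forall w : 'rV_n.+1, (w <= E)%MS -> w *m S *m w^T = 0 -> w = 0) ->
  (forall u v : 'rV_n.+1, (u <= E)%MS -> (v <= E)%MS ->
     (u *m map_mx (ratr : rat -> R) AQ *m S *m (v *m map_mx (ratr : rat -> R) AQ)^T) 0 0
       = c * (u *m S *m v^T) 0 0) ->
  forall g : {poly rat},
    horner_mx AQ g *m horner_mx AQ g = 0 -> horner_mx AQ g = 0.
Proof.
move=> dense Bu sB pd sim g gg.
apply: (descent dense) => e eE.
rewrite map_horner_mx.
apply: (@onE_semisimple R n E S _ c _ Bu sB pd sim e eE).
by rewrite -map_horner_mx -mulmxA -map_mxM gg map_mx0 mulmx0.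
Qed.

Lemma sep_minpoly n (AQ : 'M[rat]_n.+1) :
  (forall g : {poly rat},
    horner_mx AQ g *m horner_mx AQ g = 0 -> horner_mx AQ g = 0) ->
  separable_poly (mxminpoly AQ).
Proof.
move=> key.
set m := mxminpoly AQ.
have m0 : m != 0 by apply: monic_neq0; exact: mxminpoly_monic.
apply/separable_polyP; split.
  apply/poly_square_freeP => u su; apply/negP => /dvdpP [k mk].
  have [u0|u0] := eqVneq u 0.
    by move: m0; rewrite mk u0 expr2 mul0r mulr0 eqxx.
  have [k0|k0] := eqVneq k 0.
    by move: m0; rewrite mk k0 mul0r eqxx.
  have su2 : (1 < size u)%N.
    by move: su; rewrite -size_poly_eq0 in u0; case: (size u) u0 => [|[|]].
  pose g := k * u.
  have g0 : g != 0 by rewrite mulf_neq0.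
  have hg : horner_mx AQ g = 0.
    apply: key; rewrite mulmxE -rmorphM.
    have -> : g * g = k * m by rewrite mk /g; ring.
    by rewrite rmorphM /= mx_root_minpoly mulr0.
  have := dvdp_leq g0 (mxminpoly_min hg).
  rewrite -/m mk expr2 mulrA -/g size_mul //.
  move: su2; lia.
move=> u _ su; apply/eqP => u'0.
have := congr1 (fun p : {poly rat} => p`_(size u).-2) u'0.
rewrite coef_deriv coef0.
have -> : (size u).-2.+1 = (size u).-1 by case: (size u) su => [|[|]].
move/eqP; rewrite mulrn_eq0.
have lc : u`_(size u).-1 != 0.
  by rewrite -lead_coefE lead_coef_eq0 -size_poly_eq0 -lt0n (ltn_trans _ su).
rewrite (negPf lc) orbF.
by case: (size u) su => [|[|]].
Qed.

Lemma diag_of_sep n (AQ : 'M[rat]_n.+1) :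
  separable_poly (mxminpoly AQ) ->
  diagonalizable (map_mx (ratr : rat -> algC) AQ).
Proof.
move=> sep; apply/diagonalizableP.
rewrite mxminpoly_map.
set mC := map_poly _ _.
have [rs ers] := closed_field_poly_normal mC.
have mon : mC \is monic by rewrite map_monic mxminpoly_monic.
move: ers; rewrite (monicP mon) scale1r => ers.
exists rs; last by rewrite -ers dvdpp.
by rewrite -separable_prod_XsubC -ers separable_map.
Qed.

Theorem mainTheorem14 (R : realType) (p q : nat) (E F : 'M[R]_p)
    (S : 'M[R]_p) (A : 'M[int]_p) :
  (E + F :=: 1%:M)%MS -> (E :&: F = 0)%MS ->
  \rank E = q -> (1 <= q)%N ->
  dense_mod_Zp E ->
  scalar_product_on E S ->
  GLZ A ->
  (E *m map_mx intr A <= E)%MS -> (F *m map_mx intr A <= F)%MS ->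
  similarity_on E S (map_mx intr A) ->
  diagonalizable (map_mx (intr : int -> algC) A).
Proof.
case: p E F S A => [|n] E F S A _ _ _ _ dense [_ pos] hG sE _ [c _ simc].
  by rewrite (flatmx0 (map_mx _ A)); exact: diagonalizable0.
pose AQ := map_mx (intr : int -> rat) A.
have AR : map_mx (intr : int -> R) A = map_mx (ratr : rat -> R) AQ.
  by apply/matrixP => i j; rewrite !mxE ratr_int.
have AC : map_mx (intr : int -> algC) A = map_mx (ratr : rat -> algC) AQ.
  by apply/matrixP => i j; rewrite !mxE ratr_int.
rewrite AC; apply: diag_of_sep; apply: sep_minpoly.
rewrite AR in sE simc.
apply: (@key_sq R n E S AQ c dense) => //.
- rewrite -AR unitmxE det_map_mx unitfE intr_eq0.
  by apply/eqP => d0; move: hG; rewrite /GLZ d0 normr0.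
- move=> w wE ww0; apply/eqP; apply: contraT => wn0.
  by have := pos w wE wn0; rewrite ww0 mxE ltxx.
Qed.
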